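(* Let $d\ge 2$. There are constants $C_1,C_2>0$ depending only on $d$ such that for all $n\ge d+2$, all $\mathcal{F}$, $B_i$, $\mathcal{X}_v,\mathcal{Y}_v$ as in the context, and every $v\in[n]$, $$|\mathcal{Y}_v|\le C_1\left(\binom{n-1}{d-1}-|\mathcal{X}_v|\right)^{\frac{d}{d-1}}+C_2\,n^{\frac{d(d-2)}{d-1}}.$$
   Context: Let $\mathcal{F}=\{F_1,\dots,F_m\}\subseteq\binom{[n]}{d+1}$ consist of distinct sets and have VC-dimension at most $d$ (no $(d+1)$-set $S$ is shattered, i.e. no $S$ such that every $A\subseteq S$ equals $F\cap S$ for some $F\in\mathcal{F}$). For $i\in[m]$, call $B\subsetneq F_i$ admissible for $F_i$ if $F\cap F_i\neq B$ for every $F\in\mathcal{F}$ (admissible sets exist by the VC-dimension assumption). For each $i$, $B_i$ is a fixed admissible set for $F_i$ of maximum cardinality among all admissible sets for $F_i$. For $v\in[n]$, $\mathcal{X}_v:=\{F_k\setminus\{v\}: k\in[m],\ v\in B_k\}$ and $\mathcal{Y}_v:=\{F_k\setminus\{v\}: k\in[m],\ v\in F_k\setminus B_k\}$. *)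

(* Defs.v *)
From HB Require Import structures.
From mathcomp Require Import all_boot all_order all_algebra.
From mathcomp Require Import reals exp.
Set Implicit Arguments. Unset Strict Implicit. Unset Printing Implicit Defensive.

(* Ground set [n] is represented by 'I_n (0-indexed relabelling). *)

Definition shattered (n : nat) (FF : {set {set 'I_n}}) (S : {set 'I_n}) : Prop :=
  forall A : {set 'I_n}, A \subset S -> exists2 F, F \in FF & F :&: S = A.

Definition VCdim_le (n d : nat) (FF : {set {set 'I_n}}) : Prop :=
  forall S : {set 'I_n}, #|S| = d.+1 -> ~ shattered FF S.

Definition admissible (n : nat) (FF : {set {set 'I_n}}) (Fi B : {set 'I_n}) : Prop :=
  B \proper Fi /\ forall F, F \in FF -> F :&: Fi != B.

Definition max_admissible (n : nat) (FF : {set {set 'I_n}}) (Fi B : {set 'I_n}) : Prop :=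
  admissible FF Fi B /\ forall B', admissible FF Fi B' -> #|B'| <= #|B|.

Definition Xfam (n : nat) (FF : {set {set 'I_n}}) (B : {set 'I_n} -> {set 'I_n})
  (v : 'I_n) : {set {set 'I_n}} :=
  [set F :\ v | F in FF & v \in B F].

Definition Yfam (n : nat) (FF : {set {set 'I_n}}) (B : {set 'I_n} -> {set 'I_n})
  (v : 'I_n) : {set {set 'I_n}} :=
  [set F :\ v | F in FF & v \in F :\: B F].

(* Main.v *)
Require Import Defs.
From HB Require Import structures.
From mathcomp Require Import all_boot all_order all_algebra.
From mathcomp Require Import reals exp.
From mathcomp Require Import zify.
Import Order.TTheory GRing.Theory Num.Theory.
Set Implicit Arguments. Unset Strict Implicit. Unset Printing Implicit Defensive.

Lemma card_bigcup_le (I T : finType) (P : pred I) (F : I -> {set T}) :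
  #|\bigcup_(i | P i) F i| <= \sum_(i | P i) #|F i|.
Proof.
apply: (big_ind2 (fun (A : {set T}) k => #|A| <= k)) => //.
- by rewrite cards0.
- move=> A1 k1 A2 k2 h1 h2; rewrite cardsU.
  apply: leq_trans (leq_subr _ _) _; exact: leq_add.
Qed.

Lemma bin_le_exp n j : 'C(n, j) <= n ^ j.
Proof.
apply: (@leq_trans (n ^_ j)).
  by rewrite -bin_ffact leq_pmulr ?fact_gt0.
elim: j n => [|j IH] n; first by rewrite ffactn0 expn0.
rewrite ffactnS expnS leq_mul2l; apply/orP; right.
apply: leq_trans (IH _) _; case: n => [|n] //=.
case: j {IH} => [|j]; first by rewrite !expn0.
by rewrite leq_exp2r.
Qed.

Lemma card_small_sets (T : finType) e : 0 < #|T| ->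
  #|[set A : {set T} | #|A| <= e]| <= e.+1 * #|T| ^ e.
Proof.
move=> T0.
have sub : [set A : {set T} | #|A| <= e] \subset
   \bigcup_(j < e.+1) [set A : {set T} | #|A| == j].
  apply/subsetP => A; rewrite inE => hA; apply/bigcupP.
  by exists (Ordinal (hA : #|A| < e.+1)); rewrite ?inE.
apply: leq_trans (subset_leq_card sub) _.
apply: leq_trans (card_bigcup_le xpredT _) _.
rewrite -[e.+1 in X in _ <= X]card_ord -sum_nat_const.
apply: leq_sum => j _; rewrite card_draws.
apply: leq_trans (bin_le_exp _ _) _.
by apply: leq_pexp2l => //; rewrite -ltnS.
Qed.

Lemma sumB (R : realType) (I : finType) (k s : nat) (a b : I -> nat) :
  0 < k -> (forall i, a i ^ k <= s * b i ^ k) ->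
  (\sum_i a i) ^ k <= s * (\sum_i b i) ^ k.
Proof.
move=> k0 h.
pose r : R := powR (s%:R) (k%:R^-1)%R.
have r0 : (0 <= r)%R by exact: powR_ge0.
have rk : (r ^+ k = s%:R)%R.
  rewrite /r -powR_mulrn ?powR_ge0 // -powRrM mulVf ?pnatr_eq0 -?lt0n //.
  by rewrite powRr1 // ler0n.
have hi : forall i, ((a i)%:R <= r * (b i)%:R :> R)%R.
  move=> i; rewrite -(ler_pXn2r k0) ?nnegrE ?mulr_ge0 ?ler0n //.
  by rewrite exprMn rk -!natrX -natrM ler_nat.
rewrite -(ler_nat R) natrM !natrX !natr_sum.
apply: (@le_trans _ _ ((r * \sum_i ((b i)%:R : R)) ^+ k)%R).
  have sa : (0 <= \sum_i ((a i)%:R : R))%R by apply: sumr_ge0 => i _; exact: ler0n.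
  have sb : (0 <= \sum_i ((b i)%:R : R))%R by apply: sumr_ge0 => i _; exact: ler0n.
  rewrite ler_pXn2r ?nnegrE ?mulr_ge0 //.
  rewrite mulr_sumr; apply: ler_sum => i _; exact: hi.
by rewrite exprMn rk.
Qed.

Section KK.
Variable T : finType.
Definition shd (m : nat) (Y : {set {set T}}) : {set {set T}} :=
  [set H : {set T} | (#|H| == m) && [exists G in Y, H \subset G]].
Definition lnk (x : T) (Y : {set {set T}}) : {set {set T}} :=
  [set G :\ x | G in Y & x \in G].

Lemma card_lnk x Y : #|lnk x Y| = #|[set G in Y | x \in G]|.
Proof.
rewrite /lnk card_in_imset // => G1 G2; rewrite !inE => /andP[_ h1] /andP[_ h2] e.
by rewrite -(setD1K h1) -(setD1K h2) e.
Qed.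

Lemma sum_lnk k (Y : {set {set T}}) : (forall G, G \in Y -> #|G| = k) ->
  \sum_(x : T) #|lnk x Y| = k * #|Y|.
Proof.
move=> HY.
have e1 : forall x, #|lnk x Y| = \sum_(G in Y) (x \in G : nat).
  move=> x; rewrite card_lnk -sum1_card.
  rewrite (eq_bigl (fun G => (G \in Y) && (x \in G))); last by move=> G; rewrite inE.
  by rewrite big_mkcondr /=; apply: eq_bigr => G _; case: (x \in G).
rewrite (eq_bigr _ (fun x _ => e1 x)) exchange_big.
rewrite (eq_bigr (fun _ => k)); first by rewrite sum_nat_const mulnC.
move=> G HG.
rewrite -(HY _ HG) -sum1_card [RHS]big_mkcond.
by apply: eq_bigr => x _; case: (x \in G).
Qed.
Lemma shd_card m (Y : {set {set T}}) H : H \in shd m Y -> #|H| = m.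
Proof. by rewrite inE => /andP[/eqP]. Qed.

Lemma lnk_unif m (Y : {set {set T}}) x : (forall G, G \in Y -> #|G| = m.+1) ->
  forall G, G \in lnk x Y -> #|G| = m.
Proof.
move=> HY G /imsetP[G0]; rewrite inE => /andP[h0 hx] ->.
by move: (HY _ h0); rewrite (cardsD1 x) hx add1n => -[].
Qed.

Lemma lnk_sub_shd m (Y : {set {set T}}) x : (forall G, G \in Y -> #|G| = m.+1) ->
  lnk x Y \subset shd m Y.
Proof.
move=> HY; apply/subsetP => G hG; rewrite inE (lnk_unif HY hG) eqxx /=.
case/imsetP: hG => G0; rewrite inE => /andP[h0 hx] ->.
by apply/existsP; exists G0; rewrite h0 subD1set.
Qed.

Lemma shd_lnk_sub m (Y : {set {set T}}) x :
  shd m (lnk x Y) \subset lnk x (shd m.+1 Y).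
Proof.
apply/subsetP => H; rewrite inE => /andP[/eqP hH /existsP[G /andP[hG sHG]]].
case/imsetP: hG => G0; rewrite inE => /andP[h0 hx] eG; subst G.
have xH : x \notin H by apply/negP => /(subsetP sHG); rewrite !inE eqxx.
apply/imsetP; exists (x |: H); last by rewrite setU1K.
rewrite inE setU11 andbT inE cardsU1 xH hH eqxx /=.
apply/existsP; exists G0; rewrite h0 /=.
apply/subsetP => y; rewrite !inE => /orP[/eqP -> //|/(subsetP sHG)].
by rewrite inE => /andP[].
Qed.

Lemma natA m a b s : a <= s -> (0 < a -> a ^ m <= b ^ m.+1) ->
  a ^ m.+1 <= s * b ^ m.+1.
Proof.
move=> las h.
case: (posnP a) => [-> | a0]; first by rewrite exp0n.
have {h} h := h a0.
case: (leqP (s ^ m) (b ^ m.+1)) => hc.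
  apply: (@leq_trans (s ^ m.+1)); first by rewrite leq_exp2r.
  by rewrite expnS leq_mul2l hc orbT.
case: (posnP m) => [m0 | m0].
  subst m; move: hc h; rewrite expn0 expn1 ltnS leqn0 => /eqP ->.
  by rewrite expn0.
rewrite -(leq_exp2r _ _ m0) expnAC.
apply: (@leq_trans ((b ^ m.+1) ^ m.+1)); first by rewrite leq_exp2r.
rewrite expnSr expnMn [X in _ <= X]mulnC leq_mul2l; apply/orP; right.
exact: ltnW.
Qed.
Lemma KK (R : realType) m : forall Y : {set {set T}},
  (forall G, G \in Y -> #|G| = m.+1) ->
  Y != set0 -> #|Y| ^ m <= #|shd m Y| ^ m.+1.
Proof.
elim: m => [|m IH] Y HY Y0.
  rewrite expn0 expn1 card_gt0; apply/set0Pn; exists set0.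
  case/set0Pn: Y0 => G hG; rewrite inE cards0 eqxx /=.
  by apply/existsP; exists G; rewrite hG sub0set.
set S := shd m.+1 Y.
have hx : forall x, #|lnk x Y| ^ m.+1 <= #|S| * #|lnk x S| ^ m.+1.
  move=> x; apply: natA; first exact: subset_leq_card (lnk_sub_shd x HY).
  move=> a0; apply: leq_trans (IH _ (lnk_unif HY) _) _.
    by rewrite -card_gt0.
  by rewrite leq_exp2r // subset_leq_card // shd_lnk_sub.
have := sumB R (ltn0Sn m) hx.
rewrite (sum_lnk HY) (sum_lnk (@shd_card m.+1 Y)) !expnMn => h.
rewrite -(@leq_pmul2l (m.+1 ^ m.+1)) ?expn_gt0 //.
apply: (@leq_trans (m.+2 ^ m.+1 * #|Y| ^ m.+1)).
  by rewrite leq_mul2r leq_exp2r // leqnSn orbT.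
apply: leq_trans h _; rewrite (expnS _ m.+1) mulnCA. done.
Qed.
End KK.

Section Main.
Variables (n e : nat) (FF : {set {set 'I_n}}) (B : {set 'I_n} -> {set 'I_n}).
Hypothesis Hsz : forall F, F \in FF -> #|F| = e.+3.
Hypothesis Hmax : forall F, F \in FF -> max_admissible FF F (B F).

Lemma Bproper F : F \in FF -> B F \proper F.
Proof. by move=> /Hmax [[]]. Qed.

Lemma Badm F F' : F \in FF -> F' \in FF -> F' :&: F != B F.
Proof. by move=> /Hmax [[_ h] _]; apply: h. Qed.

Lemma key F F' : F \in FF -> F' \in FF -> F != F' -> B F' \subset F ->
  #|B F'| = e.+2 -> False.
Proof.
move=> hF hF' nFF' sub cB.
have sI : B F' \subset F :&: F' by rewrite subsetI sub (proper_sub (Bproper hF')).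
have le : #|F :&: F'| <= e.+2.
  rewrite leqNgt; apply/negP => h.
  have : F :&: F' == F' by rewrite eqEcard subsetIr (Hsz hF') h.
  move/eqP/setIidPr => sFF'.
  move/negP: nFF'; apply; rewrite eq_sym eqEcard sFF' (Hsz hF) (Hsz hF') leqnn.
  done.
have := Badm hF' hF; rewrite eq_sym eqEcard sI cB le.
done.
Qed.

Definition J (B0 K : {set 'I_n}) := [set F in FF | (B F == B0) && (K \subset F)].

Lemma inJ B0 K F : (F \in J B0 K) = [&& F \in FF, B F == B0 & K \subset F].
Proof. by rewrite inE. Qed.

Lemma Jcase (B0 K : {set 'I_n}) : (forall u, u \in K -> u \notin B0) ->
  #|J B0 K| <= 1 \/ (#|K| < e.+3 /\
    exists2 F', F' \in FF & B0 \subset F' /\ (forall u, u \in F' -> u \notin K)).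
Proof.
move=> dK.
case: (set_0Vmem (J B0 K)) => [-> | [F0 HF0]]; first by left; rewrite cards0.
move: HF0; rewrite inJ => /and3P[hF0 /eqP eB sK].
case: (boolP (F0 \subset B0 :|: K)) => hsub.
  left; rewrite -(cards1 F0); apply: subset_leq_card; apply/subsetP => F.
  rewrite inJ => /and3P[hF /eqP eBF sKF].
  rewrite inE eq_sym eqEcard (Hsz hF) (Hsz hF0) leqnn andbT.
  apply: subset_trans hsub _; rewrite subUset sKF -eBF (proper_sub (Bproper hF)).
  done.
have [x hx] : exists x, x \in F0 :\: (B0 :|: K).
  by apply/set0Pn; rewrite setD_eq0.
move: hx; rewrite !inE negb_or => /andP[/andP[xB xK] xF0].
right; split.
  have : K \proper F0 by apply/properP; split => //; exists x.
  by move/proper_card; rewrite (Hsz hF0).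
case: (set_0Vmem K) => [K0 | [k hk]].
  exists F0 => //; split; first by rewrite -eB (proper_sub (Bproper hF0)).
  by move=> u _; rewrite K0 inE.
set S := F0 :\: K.
have sB0S : B0 \subset S.
  apply/subsetP => y hy; rewrite inE (subsetP (proper_sub (Bproper hF0))) ?eB //.
  rewrite andbT; apply/negP => hyK; move: (dK _ hyK); rewrite hy.
  done.
have pB0S : B0 \proper S.
  by apply/properP; split => //; exists x => //; rewrite inE xK xF0.
case: (boolP [exists F' in FF, F' :&: F0 == S]) => [/existsP[F' /andP[hF' /eqP eS]] | nex].
  exists F' => //; split.
    by apply: subset_trans sB0S _; rewrite -eS subsetIl.
  move=> u hu; apply/negP => hK.
  have : u \in S by rewrite -eS inE hu (subsetP sK _ hK).
  by rewrite inE hK.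
exfalso.
have adm : admissible FF F0 S.
  split.
    apply/properP; split; first exact: subsetDl.
    by exists k; [exact: (subsetP sK) | rewrite inE hk].
  move=> F' hF'; apply/negP => /eqP e'; move/negP: nex; apply.
  by apply/existsP; exists F'; rewrite hF' e' eqxx.
have := (Hmax hF0).2 _ adm; rewrite eB leqNgt (proper_card pB0S).
done.
Qed.
Lemma Jbound (B0 : {set 'I_n}) j : forall K : {set 'I_n},
  (forall u, u \in K -> u \notin B0) ->
  e.+3 <= #|K| + j -> #|J B0 K| <= e.+3 ^ j.
Proof.
elim: j => [|j IH] K dK hK.
  case: (Jcase dK) => [h | [hlt _]]; first by rewrite expn0.
  by move: hK; rewrite addn0 leqNgt hlt.
case: (Jcase dK) => [h | [_ [F' hF' [sB0 dF']]]].
  by apply: leq_trans h _; rewrite expn_gt0.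
have sub : J B0 K \subset \bigcup_(u in F' :\: B0) J B0 (u |: K).
  apply/subsetP => F; rewrite inJ => /and3P[hF /eqP eBF sKF].
  have : ~~ (F' :&: F \subset B0).
    apply/negP => hs; have := Badm hF hF'; rewrite eBF eqEcard hs /=.
    rewrite subset_leq_card // subsetI sB0 -eBF (proper_sub (Bproper hF)).
    done.
  case/subsetPn => u hu huB.
  move: hu; rewrite inE => /andP[huF' huF].
  apply/bigcupP; exists u; first by rewrite inE huB huF'.
  by rewrite inJ hF eBF eqxx /= subUset sub1set huF sKF.
apply: leq_trans (subset_leq_card sub) _.
apply: leq_trans (card_bigcup_le _ _) _.
apply: (@leq_trans (\sum_(u in F' :\: B0) e.+3 ^ j)).
  apply: leq_sum => u; rewrite inE => /andP[huB huF']; apply: IH.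
    move=> w; rewrite !inE => /orP[/eqP -> // | ]; exact: dK.
  by rewrite cardsU1 (dF' _ huF') /= add1n addSnnS.
rewrite sum_nat_const expnS leq_mul2r; apply/orP; right.
by rewrite -(Hsz hF') subset_leq_card // subsetDl.
Qed.

Lemma Ibound (B0 : {set 'I_n}) : #|J B0 set0| <= e.+3 ^ e.+3.
Proof. by apply: Jbound => [u|]; rewrite ?inE ?cards0. Qed.

Variable v : 'I_n.

Definition Xd := [set F in FF | (v \in B F) && (#|B F| == e.+2)].
Definition Xs := [set F in FF | (v \in B F) && (#|B F| < e.+2)].

Lemma X_le : #|Xfam FF B v| <= #|Xd| + #|Xs|.
Proof.
apply: leq_trans (leq_imset_card _ _) _.
apply: (@leq_trans #|Xd :|: Xs|); last by rewrite cardsU leq_subr.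
apply: subset_leq_card; apply/subsetP => F; rewrite !inE => /andP[hF hv].
rewrite hF hv /=.
have := proper_card (Bproper hF); rewrite (Hsz hF) ltnS leq_eqVlt.
by case/orP=> ->; rewrite ?orbT.
Qed.

Lemma Xs_le : 0 < n -> #|Xs| <= e.+1 * n ^ e * e.+3 ^ e.+3.
Proof.
move=> n0.
set Bs := [set B0 : {set 'I_n} | (v \in B0) && (#|B0| < e.+2)].
have sub : Xs \subset \bigcup_(B0 in Bs) J B0 set0.
  apply/subsetP => F; rewrite inE => /andP[hF /andP[hv hc]].
  apply/bigcupP; exists (B F); first by rewrite inE hv hc.
  by rewrite inJ hF eqxx sub0set.
apply: leq_trans (subset_leq_card sub) _.
apply: leq_trans (card_bigcup_le _ _) _.
apply: (@leq_trans (\sum_(B0 in Bs) e.+3 ^ e.+3)).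
  by apply: leq_sum => B0 _; apply: Ibound.
rewrite sum_nat_const leq_mul2r; apply/orP; right.
have -> : #|Bs| = #|(fun A => A :\ v) @: Bs|.
  rewrite card_in_imset // => A1 A2; rewrite !inE => /andP[h1 _] /andP[h2 _] eA.
  by rewrite -(setD1K h1) -(setD1K h2) eA.
apply: (@leq_trans #|[set A : {set 'I_n} | #|A| <= e]|).
  apply: subset_leq_card; apply/subsetP => A /imsetP[A0]; rewrite inE => /andP[h1 h2] ->.
  by rewrite inE; move: h2; rewrite (cardsD1 v A0) h1 add1n !ltnS.
by apply: leq_trans (card_small_sets _ _) _; rewrite ?card_ord.
Qed.

Definition W := [set H : {set 'I_n} | H \subset [set~ v] & #|H| == e.+1].

Lemma cardW : #|W| = 'C(n.-1, e.+1).
Proof. by rewrite /W cards_draws cardsC1 card_ord. Qed.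

Lemma sh_le : #|shd e.+1 (Yfam FF B v)| + #|Xd| <= 'C(n.-1, e.+1).
Proof.
set Sh := shd e.+1 (Yfam FF B v).
pose phi := fun F : {set 'I_n} => B F :\ v.
have shW : Sh \subset W.
  apply/subsetP => H; rewrite inE => /andP[/eqP cH /existsP[G /andP[hG sHG]]].
  case/imsetP: hG => F; rewrite inE => /andP[hF hv] eG; subst G.
  rewrite inE cH eqxx andbT; apply/subsetP => y /(subsetP sHG).
  by rewrite !inE => /andP[].
have phW : phi @: Xd \subset W.
  apply/subsetP => H /imsetP[F]; rewrite inE => /andP[hF /andP[hv /eqP cB]] ->.
  rewrite inE /phi; apply/andP; split.
    by apply/subsetP => y; rewrite !inE => /andP[].
  by move: cB; rewrite (cardsD1 v) hv add1n => -[->].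
have disj : forall H, H \in Sh -> H \in phi @: Xd -> False.
  move=> H; rewrite inE => /andP[_ /existsP[G /andP[hG sHG]]].
  case/imsetP: hG => F; rewrite inE => /andP[hF hv] eG; subst G.
  case/imsetP => F'; rewrite inE => /andP[hF' /andP[hv' /eqP cB]] eH; subst H.
  move: hv; rewrite inE => /andP[hvB hvF].
  apply: (key hF hF' _ _ cB).
    by apply/negP => /eqP eF; subst F'; rewrite hv' in hvB.
  rewrite -(setD1K hv') subUset sub1set hvF /=.
  by apply: subset_trans sHG (subD1set _ _).
have inj : {in Xd &, injective phi}.
  move=> F1 F2; rewrite !inE => /andP[h1 /andP[v1 _]] /andP[h2 /andP[v2 /eqP c2]] eP.
  have eB : B F1 = B F2 by rewrite -(setD1K v1) -(setD1K v2) /phi in eP *; rewrite eP.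
  case: (eqVneq F1 F2) => // ne; exfalso; apply: (key h1 h2 ne _ c2).
  by rewrite -eB (proper_sub (Bproper h1)).
rewrite -(card_in_imset inj) -cardW.
have -> : #|Sh| + #|phi @: Xd| = #|Sh :|: phi @: Xd|.
  rewrite cardsU.
  have -> : Sh :&: phi @: Xd = set0.
    by apply/setP => H; rewrite in_setI in_set0; apply/negP => /andP[h1 h2]; exact: disj h1 h2.
  by rewrite cards0 subn0.
by apply: subset_leq_card; rewrite subUset shW phW.
Qed.

Lemma Y_unif G : G \in Yfam FF B v -> #|G| = e.+2.
Proof.
case/imsetP => F; rewrite inE => /andP[hF hv] ->.
move: (Hsz hF); rewrite (cardsD1 v); move: hv; rewrite inE => /andP[_ ->].
by rewrite add1n => -[].
Qed.
End Main.

Local Open Scope ring_scope.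

Lemma root_le (R : realType) (a b m : nat) : (a ^ m.+1 <= b ^ m.+2)%N ->
  (a%:R : R) <= powR b%:R ((m.+2)%:R / (m.+1)%:R).
Proof.
move=> h.
have ea : (a%:R : R) = powR ((a%:R : R) ^+ m.+1) ((m.+1)%:R^-1).
  by rewrite -powR_mulrn ?ler0n // -powRrM mulfV ?pnatr_eq0 // powRr1 ?ler0n.
rewrite ea; apply: (@le_trans _ _ (powR ((b%:R : R) ^+ m.+2) ((m.+1)%:R^-1))).
  apply: ge0_ler_powR; rewrite ?nnegrE ?invr_ge0 ?ler0n ?exprn_ge0 ?ler0n //.
  by rewrite -!natrX ler_nat.
by rewrite -powR_mulrn ?ler0n // -powRrM.
Qed.

Unset Implicit Arguments.

Theorem claim3p4 (R : realType) (d : nat) : (2 <= d)%N ->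
  exists C1 C2 : R, 0 < C1 /\ 0 < C2 /\
  forall (n : nat) (FF : {set {set 'I_n}}) (B : {set 'I_n} -> {set 'I_n}),
    (d + 2 <= n)%N ->
    (forall F, F \in FF -> #|F| = d.+1) ->
    VCdim_le d FF ->
    (forall F, F \in FF -> max_admissible FF F (B F)) ->
    forall v : 'I_n,
      (#|Yfam FF B v|%:R : R) <=
        C1 * powR ((('C(n.-1, d.-1) - #|Xfam FF B v|)%N)%:R) (d%:R / (d.-1)%:R)
        + C2 * powR (n%:R) ((d * (d - 2))%:R / (d.-1)%:R).
Proof.
case: d => [|[|e]] // _.
pose p : R := (e.+2)%:R / (e.+1)%:R.
pose K := (e.+1 * e.+3 ^ e.+3)%N.
exists (powR 2 p), (powR 2 p * powR K%:R p).
have p0 : 0 <= p by rewrite divr_ge0 ?ler0n.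
split; first by rewrite powR_gt0.
split; first by rewrite mulr_gt0 // powR_gt0 // ltr0n muln_gt0 expn_gt0.
move=> n FF B hn Hsz _ Hmax v.
have -> : (e.+2.-1 = e.+1)%N by [].
have -> : (e.+2 - 2 = e)%N by rewrite subSS subSS subn0.
rewrite -/p.
set Y := Yfam FF B v.
set s := #|shd e.+1 Y|.
set D := ('C(n.-1, e.+1) - #|Xfam FF B v|)%N.
have n0 : (0 < n)%N by apply: leq_trans hn.
have hs : (s <= D + K * n ^ e)%N.
  have h1 := sh_le Hsz Hmax v.
  have h2 := X_le Hsz Hmax v.
  have h3 := Xs_le Hsz Hmax v n0.
  have eK : (e.+1 * n ^ e * e.+3 ^ e.+3 = K * n ^ e)%N by rewrite /K mulnAC.
  rewrite eK in h3; rewrite /D.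
  move: h1 h2 h3; set Z := (K * n ^ e)%N; rewrite -/s; lia.
have hy : (#|Y|%:R : R) <= powR s%:R p.
  case: (eqVneq Y set0) => [-> | Y0]; first by rewrite cards0 powR_ge0.
  apply: root_le; exact: (KK R (Y_unif Hsz (v:=v)) Y0).
apply: le_trans hy _.
have hq : (s%:R : R) <= D%:R + K%:R * n%:R ^+ e.
  by rewrite -natrX -natrM -natrD ler_nat.
have nN : 0 <= (n%:R : R) ^+ e by rewrite exprn_ge0 // ler0n.
have D0 : 0 <= (D%:R : R) by rewrite ler0n.
have K0 : 0 <= (K%:R : R) by rewrite ler0n.
pose Q : R := K%:R * n%:R ^+ e.
have Q0 : 0 <= Q by rewrite mulr_ge0.
apply: (@le_trans _ _ (powR (D%:R + Q) p)).
  by apply: ge0_ler_powR; rewrite // nnegrE ?ler0n ?addr_ge0.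
have eN : powR ((n%:R : R) ^+ e) p = powR n%:R ((e.+2 * e)%:R / e.+1%:R).
  by rewrite -powR_mulrn ?ler0n // -powRrM natrM /p mulrCA mulrA.
have eQ : powR Q p = powR K%:R p * powR n%:R ((e.+2 * e)%:R / e.+1%:R).
  by rewrite powRM // eN.
have t0 : 0 <= powR 2 p * powR (D%:R : R) p by rewrite mulr_ge0 ?powR_ge0.
have t1 : 0 <= powR 2 p * powR (K%:R : R) p * powR n%:R ((e.+2 * e)%:R / e.+1%:R).
  by rewrite !mulr_ge0 ?powR_ge0.
case/orP: (le_total (D%:R : R) Q) => hDQ.
  apply: (@le_trans _ _ (powR (2 * Q) p)).
    apply: ge0_ler_powR; rewrite // ?nnegrE ?addr_ge0 ?mulr_ge0 //.
    by rewrite mulrDl mul1r lerD2r.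
  rewrite powRM // eQ mulrA; exact: ler_wpDl.
apply: (@le_trans _ _ (powR (2 * D%:R) p)).
  apply: ge0_ler_powR; rewrite // ?nnegrE ?addr_ge0 ?mulr_ge0 //.
  by rewrite mulrDl mul1r lerD2l.
rewrite powRM //; exact: ler_wpDr.
Qed.
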